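(* Let $S=\{v_1,\ldots,v_n\}\subset\mathbb Z^n$ ($n\ge1$) be an orthogonal subset with $|V_\alpha|\ge2$ for all $\alpha$ and $\mathcal P_2=\mathcal Q_2$. Then the lattice generated by $S$ is not cubiquitous.
   Context: $\mathbb Z^n$ carries the standard dot product with standard basis $e_1,\ldots,e_n$. $S$ is orthogonal if $\langle v_\alpha,v_\alpha\rangle\ge1$ for all $\alpha$ and $\langle v_\alpha,v_\beta\rangle=0$ for $\alpha\ne\beta$. $V_\alpha=\{j:\langle v_\alpha,e_j\rangle\ne0\}$, $E_j=\{\alpha:\langle v_\alpha,e_j\rangle\ne0\}$, $\mathcal P_2=\{j:|E_j|=2\}$, and $\mathcal Q_2=\{i\in\mathcal P_2: |\langle v_u,e_i\rangle|\ge2 \text{ for some } u\in E_i\}$. A full-rank sublattice $\Lambda\subset\mathbb Z^n$ is cubiquitous if $\Lambda\cap(x+\{0,1\}^n)\ne\emptyset$ for every $x\in\mathbb Z^n$. *)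

(* Defs.v *)
From mathcomp Require Import all_boot all_order all_algebra.
Set Implicit Arguments. Unset Strict Implicit. Unset Printing Implicit Defensive.
Import Order.TTheory GRing.Theory Num.Theory.
Local Open Scope ring_scope.

(* A family S = {v_1,...,v_n} in Z^n is encoded by the integer matrix S whose
   row a is v_a; hence S a j = <v_a, e_j>. Vectors of Z^n are 'rV[int]_n. *)

Definition dotZ (n : nat) (u v : 'rV[int]_n) : int := \sum_(j < n) u 0 j * v 0 j.

Definition orthogonal_family (n : nat) (S : 'M[int]_n) : Prop :=
  (forall a : 'I_n, 1 <= dotZ (row a S) (row a S)) /\
  (forall a b : 'I_n, a != b -> dotZ (row a S) (row b S) = 0).

Definition Vsupp (n : nat) (S : 'M[int]_n) (a : 'I_n) : {set 'I_n} :=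
  [set j | S a j != 0].
Definition Ecol (n : nat) (S : 'M[int]_n) (j : 'I_n) : {set 'I_n} :=
  [set a | S a j != 0].
Definition P2 (n : nat) (S : 'M[int]_n) : {set 'I_n} :=
  [set j | #|Ecol S j| == 2%N].
Definition Q2 (n : nat) (S : 'M[int]_n) : {set 'I_n} :=
  [set i in P2 S | [exists u in Ecol S i, 2%:Z <= `|S u i|]].

Definition lattice_of (n : nat) (S : 'M[int]_n) : 'rV[int]_n -> Prop :=
  fun y => exists c : 'rV[int]_n, y = c *m S.

Definition full_rank (n : nat) (L : 'rV[int]_n -> Prop) : Prop :=
  exists B : 'M[int]_n, (forall i, L (row i B)) /\ \det B != 0.

Definition cubiquitous (n : nat) (L : 'rV[int]_n -> Prop) : Prop :=
  full_rank L /\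
  forall x : 'rV[int]_n, exists e : 'rV[int]_n,
    (forall j, e 0 j = 0 \/ e 0 j = 1) /\ L (x + e).

(* Main.v *)
Require Import Defs.
From mathcomp Require Import all_boot all_order all_algebra.
From mathcomp Require Import zify ring lra.
Import Order.TTheory GRing.Theory Num.Theory.
Local Open Scope ring_scope.

Section S.
Variables (n : nat) (S : 'M[int]_n).
Definition kk (a : 'I_n) : int := \sum_(j < n) S a j * S a j.

Lemma dotrow (u : 'rV[int]_n) a : dotZ u (row a S) = \sum_j u 0 j * S a j.
Proof. by apply: eq_bigr => j _; rewrite mxE. Qed.

Lemma orth_off (H : orthogonal_family S) a b : a != b -> \sum_j S a j * S b j = 0.
Proof.
move=> ab; have := H.2 a b ab; rewrite /dotZ.
by under eq_bigr do rewrite !mxE.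
Qed.

Lemma kk_ge1 (H : orthogonal_family S) a : 1 <= kk a.
Proof.
case: H => /(_ a) + _; rewrite /dotZ /kk.
by under eq_bigr do rewrite !mxE.
Qed.

Lemma lat_dot (H : orthogonal_family S) (c : 'rV[int]_n) a :
  \sum_j (c *m S) 0 j * S a j = c 0 a * kk a.
Proof.
under eq_bigr do rewrite mxE big_distrl /=.
rewrite exchange_big (bigD1 a) //= [X in _ + X]big1 ?addr0.
  by rewrite /kk big_distrr; apply: eq_bigr => j _; rewrite -mulrA.
move=> b ba; under eq_bigr do rewrite -mulrA.
by rewrite -big_distrr /= (orth_off H _ _ ba) mulr0.
Qed.
Lemma bessel (H : orthogonal_family S) (u : 'I_n -> int) :
  \sum_a (((\sum_j u j * S a j) ^+ 2)%:~R / (kk a)%:~R : rat)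
   <= \sum_j ((u j ^+ 2)%:~R : rat).
Proof.
pose Sr a j : rat := (S a j)%:~R.
pose U j : rat := (u j)%:~R.
pose d a := \sum_j U j * Sr a j.
pose K a := \sum_j Sr a j * Sr a j.
have Kne a : K a != 0.
  have := kk_ge1 H a; rewrite /K /kk => h.
  have -> : \sum_j Sr a j * Sr a j = (\sum_j S a j * S a j)%:~R.
    by rewrite rmorph_sum; apply: eq_bigr => j _; rewrite rmorphM.
  by rewrite intr_eq0; apply/eqP => e; rewrite e in h.
have orr a b : a != b -> \sum_j Sr a j * Sr b j = 0.
  move=> ab; have h := congr1 (fun z : int => (z%:~R : rat)) (orth_off H _ _ ab).
  rewrite /= rmorph_sum rmorph0 in h; rewrite -[X in _ = X]h.
  by apply: eq_bigr => j _; rewrite rmorphM.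
have -> : \sum_a (((\sum_j u j * S a j) ^+ 2)%:~R / (kk a)%:~R : rat) = \sum_a d a ^+ 2 / K a.
  apply: eq_bigr => a _; rewrite /d /K /kk !rmorphXn !rmorph_sum.
  by congr (_ ^+ 2 / _); apply: eq_bigr => j _; rewrite rmorphM.
have -> : \sum_j ((u j ^+ 2)%:~R : rat) = \sum_j U j ^+ 2.
  by apply: eq_bigr => j _; rewrite rmorphXn.
pose l a := d a / K a.
have key : 0 <= \sum_j (U j - \sum_a l a * Sr a j) ^+ 2.
  by apply: sumr_ge0 => j _; rewrite sqr_ge0.
have e1 : \sum_j (U j - \sum_a l a * Sr a j) ^+ 2 =
   \sum_j U j ^+ 2 - 2 * \sum_j U j * (\sum_a l a * Sr a j)
   + \sum_j (\sum_a l a * Sr a j) * (\sum_b l b * Sr b j).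
  rewrite mulr_sumr -sumrN -!big_split /=.
  by apply: eq_bigr => j _; ring.
have e2 : \sum_j U j * (\sum_a l a * Sr a j) = \sum_a l a * d a.
  under eq_bigr do rewrite big_distrr /=.
  rewrite exchange_big; apply: eq_bigr => a _; rewrite /d big_distrr.
  by apply: eq_bigr => j _ /=; ring.
have e3 : \sum_j (\sum_a l a * Sr a j) * (\sum_b l b * Sr b j) = \sum_a l a * l a * K a.
  under eq_bigr do rewrite big_distrl /=.
  rewrite exchange_big; apply: eq_bigr => a _ /=.
  under eq_bigr do rewrite big_distrr /=.
  rewrite exchange_big (bigD1 a) //= [X in _ + X]big1 ?addr0.
    by rewrite /K big_distrr; apply: eq_bigr => j _ /=; ring.
  move=> b ba.
  have -> : \sum_i l a * Sr a i * (l b * Sr b i) = l a * l b * \sum_i Sr b i * Sr a i.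
    by rewrite big_distrr; apply: eq_bigr => j _ /=; ring.
  by rewrite orr ?mulr0.
have e4 a : l a * d a = d a ^+ 2 / K a by rewrite /l; field; exact: Kne.
have e5 a : l a * l a * K a = d a ^+ 2 / K a by rewrite /l; field; exact: Kne.
move: key; rewrite e1 e2 e3.
rewrite (eq_bigr _ (fun a _ => e4 a)) (eq_bigr _ (fun a _ => e5 a)).
lra.
Qed.
Lemma case1 a i : (2 <= #|Vsupp S a|)%N -> 2 <= `|S a i| ->
  exists x : 'rV[int]_n, forall e : 'rV[int]_n, (forall j, e 0 j = 0 \/ e 0 j = 1) ->
   0 < \sum_j (x + e) 0 j * S a j < kk a.
Proof.
move=> hV hi.
have Pi : S a i != 0 by apply/eqP => h; rewrite h in hi.
case: (@arg_minnP _ i (fun j => S a j != 0) (fun j => absz (S a j)) Pi) => j0 Pj0 minj0.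
set mu := `|S a j0|.
have mu_min j : S a j != 0 -> mu <= `|S a j|.
  move=> /minj0; rewrite /mu -!abszE; lia.
have mu1 : 1 <= mu by move: Pj0; rewrite /mu; lia.
pose x := \row_j (if j == j0 then (if S a j < 0 then -2 else 1) else (if S a j < 0 then -1 else 0)) : 'rV[int]_n.
exists x => e he.
have tb j : (if j == j0 then `|S a j| else 0) <= (x + e) 0 j * S a j <=
             `|S a j| + (if j == j0 then `|S a j| else 0).
  rewrite !mxE; case: (j == j0); case: (he j) => ->; case: (ltP (S a j) 0) => hs; lia.
have lo : mu <= \sum_j (x + e) 0 j * S a j.
  apply: le_trans (ler_sum _ (fun j _ => (andP (tb j)).1)).
  rewrite (bigD1 j0) //= big1 ?addr0; first by rewrite /mu; case: eqP.
  by move=> j /negbTE ->.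
have hi2 : \sum_j (x + e) 0 j * S a j <= \sum_j `|S a j| + mu.
  apply: le_trans (ler_sum _ (fun j _ => (andP (tb j)).2)) _.
  rewrite big_split /= lerD2l (bigD1 j0) //= big1 ?addr0; first by rewrite /mu; case: eqP.
  by move=> j /negbTE ->.
have key : mu < \sum_j (S a j * S a j - `|S a j|).
  have nn j : 0 <= S a j * S a j - `|S a j| by nia.
  have [mu_eq1|mu_gt1] := eqVneq mu 1.
    rewrite (bigD1 i) //=.
    rewrite mu_eq1; apply: (@lt_le_trans _ _ (S a i * S a i - `|S a i|)); first nia.
    rewrite lerDl; apply: sumr_ge0 => j _; exact: nn.
  have : (0 < #|Vsupp S a :\ j0|)%N by rewrite (cardsD1 j0) inE Pj0 in hV.
  case/card_gt0P => j1; rewrite !inE => /andP [j10 j1s].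
  rewrite (bigD1 j0) //= (bigD1 j1) //=.
  apply: (@lt_le_trans _ _ ((S a j0 * S a j0 - `|S a j0|) + (S a j1 * S a j1 - `|S a j1|))).
    have := mu_min _ j1s; move: mu1 mu_gt1; rewrite /mu => m1 m2 m3.
    have m4 : 2 <= `|S a j0| by lia.
    nia.
  rewrite lerD2l lerDl; apply: sumr_ge0 => j _; exact: nn.
apply/andP; split; first lia.
apply: le_lt_trans hi2 _.
move: key; rewrite sumrB /kk; lra.
Qed.
Lemma dot2 a j l r : #|Vsupp S a| = 2%N -> S a j != 0 -> S a l != 0 -> j != l ->
  \sum_i S a i * S r i = S a j * S r j + S a l * S r l.
Proof.
move=> hc hj hl jl.
have E : Vsupp S a = [set j; l].
  apply/eqP; rewrite eq_sym eqEcard hc cards2 jl leqnn andbT.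
  by apply/subsetP => i; rewrite !inE => /orP [] /eqP ->.
rewrite (bigD1 j) //= (bigD1 l) 1?eq_sym //= big1 ?addr0 ?addrA //.
move=> i /andP [ij il]; suff -> : S a i = 0 by rewrite mul0r.
apply/eqP; apply: contraNT (ij) => h.
have : i \in Vsupp S a by rewrite inE.
by rewrite E !inE (negbTE il) orbF.
Qed.

Lemma pm1 {x : int} : `|x| <= 1 -> x != 0 -> x = 1 \/ x = -1.
Proof. lia. Qed.

Lemma col_le1 (H : orthogonal_family S) (h01 : forall a j, `|S a j| <= 1)
  (hk : forall a, #|Vsupp S a| = 2%N) j : (#|Ecol S j| <= 2)%N.
Proof.
rewrite leqNgt; apply/negP => h3.
have [a aE] : exists a, a \in Ecol S j.
  by apply/card_gt0P; apply: leq_trans h3.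
have h2 : (1 < #|Ecol S j :\ a|)%N by move: h3; rewrite (cardsD1 a) aE add1n ltnS.
have [b bE] : exists b, b \in Ecol S j :\ a.
  by apply/card_gt0P; apply: leq_trans h2.
have h1 : (0 < #|(Ecol S j :\ a) :\ b|)%N by move: h2; rewrite (cardsD1 b) bE add1n ltnS.
have [c cE] : exists c, c \in (Ecol S j :\ a) :\ b.
  by apply/card_gt0P.
move: aE bE cE; rewrite !inE => aj /andP [ba bj] /andP [cb /andP [ca cj]].
have [la la_] : exists la, la \in Vsupp S a :\ j.
  apply/card_gt0P.
  by have := cardsD1 j (Vsupp S a); rewrite hk inE aj add1n => -[<-].
move: la_; rewrite !inE => /andP [laj al].
have ab : a != b by rewrite eq_sym.
have ac : a != c by rewrite eq_sym.
have bc : b != c by rewrite eq_sym.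
have dab := orth_off H a b ab.
have dac := orth_off H a c ac.
have jla : j != la by rewrite eq_sym.
rewrite (dot2 a j la b (hk a) aj al jla) in dab.
rewrite (dot2 a j la c (hk a) aj al jla) in dac.
have bla : S b la != 0.
  apply/eqP => e; rewrite e mulr0 addr0 in dab; move/eqP: dab; rewrite mulf_eq0.
  by rewrite (negbTE aj) (negbTE bj).
have dbc := orth_off H b c bc.
rewrite (dot2 b j la c (hk b) bj bla jla) in dbc.
have cla : S c la != 0.
  apply/eqP => e; rewrite e mulr0 addr0 in dac; move/eqP: dac; rewrite mulf_eq0.
  by rewrite (negbTE aj) (negbTE cj).
move: dab dac dbc.
case: (pm1 (h01 a j) aj) => ->; case: (pm1 (h01 a la) al) => ->;
case: (pm1 (h01 b j) bj) => ->; case: (pm1 (h01 b la) bla) => ->;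
case: (pm1 (h01 c j) cj) => ->; case: (pm1 (h01 c la) cla) => ->; lia.
Qed.

End S.

Section S2.
Variables (n : nat) (S : 'M[int]_n).
Lemma dcount : (\sum_a #|Vsupp S a| = \sum_j #|Ecol S j|)%N.
Proof.
have e1 a : #|Vsupp S a| = (\sum_j (S a j != 0))%N.
  by rewrite -sum1_card big_mkcond /=; apply: eq_bigr => j _; rewrite inE; case: (S a j != 0).
have e2 j : #|Ecol S j| = (\sum_a (S a j != 0))%N.
  by rewrite -sum1_card big_mkcond /=; apply: eq_bigr => a _; rewrite inE; case: (S a j != 0).
rewrite (eq_bigr _ (fun a _ => e1 a)) (eq_bigr _ (fun j _ => e2 j)).
exact: exchange_big.
Qed.

Lemma allk2_false (H : orthogonal_family S) (h01 : forall a j, `|S a j| <= 1)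
  (hk : forall a, #|Vsupp S a| = 2%N) (hP : forall j, #|Ecol S j| != 2%N) : (0 < n)%N -> False.
Proof.
move=> n0.
have le1 j : (#|Ecol S j| <= 1)%N.
  have := @col_le1 n S H h01 hk j; have := hP j; lia.
have := dcount; rewrite (eq_bigr _ (fun a _ => hk a)) sum_nat_const card_ord.
have : (\sum_j #|Ecol S j| <= \sum_(j < n) 1)%N by apply: leq_sum => j _; exact: le1.
rewrite sum_nat_const card_ord; lia.
Qed.
End S2.

Definition rho (k t : int) : int :=
  if (2 * k %| t - k)%Z then k * k
  else if (3 <= k) && (2 * k %| t - k + 2)%Z then 1 else 0.

Lemma rho_ge0 k t : 0 <= k -> 0 <= rho k t.
Proof. rewrite /rho => h; case: ifP => _; [nia| case: ifP => _; lia]. Qed.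

Lemma rho_le k t c : 2 <= k -> rho k t <= (2 * c * k - t) ^+ 2.
Proof.
move=> hk; rewrite /rho; case: ifP => [/dvdzP [q hq]|_].
  have -> : 2 * c * k - t = k * (2 * (c - q) - 1) by lia.
  have : 1 <= (2 * (c - q) - 1) ^+ 2 by nia.
  nia.
case: ifP => [/andP [k3 /dvdzP [q hq]]|_]; last by rewrite sqr_ge0.
have -> : 2 * c * k - t = k * (2 * (c - q) - 1) + 2 by lia.
suff : k * (2 * (c - q) - 1) + 2 != 0 by move=> h; nia.
apply/eqP => h0; have : 1 <= (2 * (c - q) - 1) ^+ 2 by nia.
nia.
Qed.

Section Box.
Variables (n N0 : nat) (S : 'M[int]_n).
Local Notation M := N0.+1.
Definition xint (x : {ffun 'I_n -> 'I_M}) : 'rV[int]_n := \row_j ((x j : nat)%:Z).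
Definition tt a (x : 'rV[int]_n) : int := \sum_j (2 * x 0 j + 1) * S a j.

Definition zmodM (z : int) : 'I_M := inord (absz (z %% M%:Z)%Z).
Lemma zmodM_val z : ((zmodM z : nat)%:Z) = (z %% M%:Z)%Z.
Proof.
rewrite /zmodM inordK.
  by rewrite gez0_abs // modz_ge0.
have := ltz_pmod z (isT : (0 < M%:Z)); have := modz_ge0 z (isT : M%:Z != 0); lia.
Qed.

Definition shift j0 (eps : int) (i : nat) (x : {ffun 'I_n -> 'I_M}) : {ffun 'I_n -> 'I_M} :=
  [ffun j => if j == j0 then zmodM ((x j0 : nat)%:Z + eps * i%:Z) else x j].

Lemma shift_inj j0 eps i : injective (shift j0 eps i).
Proof.
move=> x y /ffunP h; apply/ffunP => j.
have := h j; rewrite !ffunE; case: eqP => [->|] // /(congr1 (fun o : 'I_M => (o : nat)%:Z)).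
rewrite !zmodM_val => /eqP; rewrite -/(_ == _ %[mod _])%Z eqz_modDr => /eqP.
rewrite !modz_small; last 2 first.
- by apply/andP; split => //; have := ltn_ord (y j0); lia.
- by apply/andP; split => //; have := ltn_ord (x j0); lia.
by move=> e; apply/val_inj => /=; lia.
Qed.

Lemma tt_shift a j0 eps i x (k : int) : S a j0 = eps -> eps * eps = 1 -> (k %| M%:Z)%Z ->
  (2 * k %| tt a (xint (shift j0 eps i x)) - tt a (xint x) - 2 * i%:Z)%Z.
Proof.
move=> hS he /dvdzP [r hr].
set y := shift j0 eps i x.
have d : tt a (xint y) - tt a (xint x) = \sum_j 2 * ((xint y) 0 j - (xint x) 0 j) * S a j.
  by rewrite /tt -sumrB; apply: eq_bigr => j _; ring.
rewrite d (bigD1 j0) //= big1 ?addr0; last first.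
  move=> j /negbTE hj; rewrite /y /xint !mxE /shift ffunE hj; ring.
rewrite /y /xint !mxE /shift ffunE eqxx zmodM_val hS.
set z := ((x j0 : nat)%:Z + eps * i%:Z).
have hz := divz_eq z (M%:Z).
set q := (z %/ M%:Z)%Z in hz *.
apply/dvdzP; exists (- q * r * eps).
have -> : (z %% M%:Z)%Z = z - q * M%:Z by lia.
rewrite hr /z.
transitivity ((eps * eps - 1) * (2 * i%:Z) + (- q * r * eps) * (2 * k)); first by ring.
by rewrite he subrr mul0r add0r.
Qed.


Lemma per_x a j0 eps x (k : int) : S a j0 = eps -> eps * eps = 1 -> (k %| M%:Z)%Z -> 2 <= k ->
  (exists h0, tt a (xint x) - k = 2 * h0) ->
  k * k + (if 3 <= k then 1 else 0) <= \sum_(i < absz k) rho k (tt a (xint (shift j0 eps i x))).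
Proof.
move=> hS he hkM hk [h0 hh0].
have Kk : (absz k)%:Z = k by lia.
have k0 : 0 < k by lia.
set T := fun i : nat => tt a (xint (shift j0 eps i x)).
have hT i : (2 * k %| T i - tt a (xint x) - 2 * i%:Z)%Z by apply: tt_shift.
set w1 := ((- h0) %% k)%Z.
set w2 := ((- h0 - 1) %% k)%Z.
have w1b : 0 <= w1 < k.
  by rewrite /w1 modz_ge0 ?ltz_pmod //; lia.
have w2b : 0 <= w2 < k.
  by rewrite /w2 modz_ge0 ?ltz_pmod //; lia.
have d1 := divz_eq (- h0) k; have d2 := divz_eq (- h0 - 1) k.
rewrite -/w1 in d1; rewrite -/w2 in d2.
have i1lt : (absz w1 < absz k)%N by lia.
have i2lt : (absz w2 < absz k)%N by lia.
pose o1 := Ordinal i1lt; pose o2 := Ordinal i2lt.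
have r1 : rho k (T o1) = k * k.
  rewrite /rho ifT //.
  have -> : T o1 - k = (T o1 - tt a (xint x) - 2 * (absz w1)%:Z) + 2 * k * (- ((- h0) %/ k)%Z).
    have : (absz w1)%:Z = w1 by lia.
    move=> e; rewrite e; lia.
  by apply: rpredD => //; apply: dvdz_mulr; apply: dvdzz.
have r2 : 3 <= k -> 1 <= rho k (T o2).
  move=> k3; rewrite /rho; case: ifP => _; first nia.
  rewrite k3 /= ifT //.
  have -> : T o2 - k + 2 = (T o2 - tt a (xint x) - 2 * (absz w2)%:Z) + 2 * k * (- ((- h0 - 1) %/ k)%Z).
    have : (absz w2)%:Z = w2 by lia.
    move=> e; rewrite e; lia.
  by apply: rpredD => //; apply: dvdz_mulr; apply: dvdzz.
have nn i : 0 <= rho k (T i) by apply: rho_ge0; lia.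
rewrite (bigD1 o1) //= r1.
case: ifP => k3.
  have o21 : o2 != o1.
    apply/eqP => /(congr1 val) /= e.
    have ew : w1 = w2 by lia.
    have : 1 = (divz (- h0) k - divz (- h0 - 1) k) * k by lia.
    set dd := (_ - _); move=> e1.
    have [dd0|dd0] := lerP dd 0; nia.
  rewrite (bigD1 o2) //= lerD2l.
  apply: ler_wpDr; first by apply: sumr_ge0 => i _; exact: nn.
  exact: r2.
by rewrite addr0 lerDl; apply: sumr_ge0 => i _; exact: nn.
Qed.

Lemma avg a j0 eps (k : int) : S a j0 = eps -> eps * eps = 1 -> (k %| M%:Z)%Z -> 2 <= k ->
  (forall x, exists h0, tt a (xint x) - k = 2 * h0) ->
  (#|{ffun 'I_n -> 'I_M}|%:Z) * (k * k + (if 3 <= k then 1 else 0))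
   <= k * \sum_(x : {ffun 'I_n -> 'I_M}) rho k (tt a (xint x)).
Proof.
move=> hS he hkM hk hh.
have Kk : (absz k)%:Z = k by lia.
have -> : k * \sum_(x : {ffun 'I_n -> 'I_M}) rho k (tt a (xint x)) =
  \sum_(i < absz k) \sum_(x : {ffun 'I_n -> 'I_M}) rho k (tt a (xint (shift j0 eps i x))).
  transitivity (\sum_(i < absz k) \sum_(x : {ffun 'I_n -> 'I_M}) rho k (tt a (xint x))).
    by rewrite sumr_const card_ord -mulr_natl; congr (_ * _); lia.
  apply: eq_bigr => i _.
  exact: (reindex_inj (@shift_inj j0 eps i)).
rewrite exchange_big /=.
have -> : (#|{ffun 'I_n -> 'I_M}|%:Z) * (k * k + (if 3 <= k then 1 else 0)) =
   \sum_(x : {ffun 'I_n -> 'I_M}) (k * k + (if 3 <= k then 1 else 0)).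
  by rewrite sumr_const -(mulr_natl _ #|_|); congr (_ * _); rewrite cardT; lia.
apply: ler_sum => x _; exact: per_x.
Qed.
End Box.

Arguments kk {n}. Arguments tt {n}. Arguments xint {n N0}.
Arguments bessel {n S}. Arguments lat_dot {n S}.

Definition mm (n : nat) (S : 'M[int]_n) a : int := \sum_j (if S a j < 0 then 1 else 0).
Arguments mm {n}.

Lemma kk_sig n (S : 'M[int]_n) (h01 : forall a j, `|S a j| <= 1) a (x : 'rV[int]_n) :
  tt S a x - kk S a = 2 * (\sum_j x 0 j * S a j - mm S a).
Proof.
rewrite /tt /kk /mm -sumrB mulrBr !mulr_sumr -sumrB; apply: eq_bigr => j _.
have : S a j = -1 \/ S a j = 0 \/ S a j = 1 by have := h01 a j; lia.
by case=> [->|[->|->]] /=; rewrite ?ltrN10 ?ltxx ?ltr10 /=; ring.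
Qed.

Lemma final n (S : 'M[int]_n) (H : orthogonal_family S) (x e c : 'rV[int]_n) :
  (forall j, e 0 j = 0 \/ e 0 j = 1) -> x + e = c *m S -> (forall a, 2 <= kk S a) ->
  \sum_a ((rho (kk S a) (tt S a x))%:~R / (kk S a)%:~R : rat) <= n%:R.
Proof.
move=> he hc hk.
pose u j := 2 * e 0 j - 1.
have B := bessel H u.
have E : \sum_j (((u j) ^+ 2)%:~R : rat) = n%:R.
  rewrite (eq_bigr (fun _ => 1)) ?sumr_const ?card_ord //.
  by move=> j _; rewrite /u; case: (he j) => ->.
rewrite E in B.
apply: le_trans B; apply: ler_sum => a _.
have kp : (0 : rat) < (kk S a)%:~R by rewrite ltr0z; have := hk a; lia.
rewrite ler_pM2r ?invr_gt0 // ler_int.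
have -> : \sum_j u j * S a j = 2 * c 0 a * kk S a - tt S a x.
  have L := lat_dot H c a; rewrite -hc in L.
  rewrite /tt; apply/eqP; rewrite -subr_eq0; apply/eqP.
  have -> : \sum_j u j * S a j = 2 * \sum_j (x + e) 0 j * S a j - \sum_j (2 * x 0 j + 1) * S a j.
    rewrite mulr_sumr -sumrB; apply: eq_bigr => j _; rewrite /u mxE; ring.
  rewrite L; ring.
exact: rho_le.
Qed.

Arguments kk_ge1 {n S}. Arguments case1 {n S}. Arguments allk2_false {n S}.
Arguments avg {n N0 S}. Arguments final {n S}.

Theorem proposition4p3 (n : nat) (S : 'M[int]_n) :
  (0 < n)%N ->
  orthogonal_family S ->
  (forall a : 'I_n, (2 <= #|Vsupp S a|)%N) ->
  P2 S = Q2 S ->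
  ~ cubiquitous (lattice_of S).
Proof.
move=> n0 H hV hPQ [_ hcub].
have kk1 := kk_ge1 H.
case: (boolP [exists a, exists i, 2 <= `|S a i|]).
  case/existsP => a /existsP [i hi].
  have [x hx] := case1 a i (hV a) hi.
  have [e [he [c hc]]] := hcub x.
  have := hx e he; rewrite hc (lat_dot H c a).
  have := kk1 a; move=> k1 /andP [p q].
  have [c0|c0] := lerP (c 0 a) 0; nia.
rewrite negb_exists => /forallP h01'.
have h01 a j : `|S a j| <= 1.
  by have := h01' a; rewrite negb_exists => /forallP /(_ j); rewrite -ltNge; lia.
have hP j : #|Ecol S j| != 2%N.
  apply/negP => h2.
  have : j \in P2 S by rewrite inE h2.
  rewrite hPQ inE => /andP [_ /existsP [u /andP [_ hu]]].
  by have := h01 u j; lia.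
have kkV a : kk S a = (#|Vsupp S a|)%:Z.
  rewrite /kk -sum1_card -natz natr_sum [RHS]big_mkcond /=; apply: eq_bigr => j _.
  rewrite inE; have := h01 a j; case: eqP => [->|ne]; first by rewrite mulr0.
  move=> h /=; have : S a j = 1 \/ S a j = -1 by lia.
  by case=> ->.
have k2 a : 2 <= kk S a by rewrite kkV; have := hV a; lia.
case: (boolP [exists a, 3 <= kk S a]); last first.
  rewrite negb_exists => /forallP h3.
  apply: (allk2_false H h01 _ hP n0) => a.
  have := hV a; have := h3 a; rewrite kkV -ltNge; lia.
case/existsP => a0 ha0.
set Mn := (\prod_(a < n) absz (kk S a))%N.
have Mpos : (0 < Mn)%N by rewrite prodn_gt0 // => a; have := kk1 a; lia.
set N0 := Mn.-1.
have MN : N0.+1 = Mn by rewrite prednK.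
have kdiv a : (kk S a %| N0.+1%:Z)%Z.
  rewrite MN dvdzE absz_nat /Mn (bigD1 a) //=; exact: dvdn_mulr.
have hav a : (#|{ffun 'I_n -> 'I_N0.+1}|%:Z) * (kk S a * kk S a + (if 3 <= kk S a then 1 else 0))
   <= kk S a * \sum_(x : {ffun 'I_n -> 'I_N0.+1}) rho (kk S a) (tt S a (xint x)).
  have [j0 j0s] : exists j0, j0 \in Vsupp S a by apply/card_gt0P; have := hV a; lia.
  rewrite inE in j0s.
  apply: (avg a j0 (S a j0)) => //.
  - have : S a j0 = 1 \/ S a j0 = -1 by have := h01 a j0; lia.
    by case=> ->.
  - move=> x; exists (\sum_j (xint x) 0 j * S a j - mm S a); exact: kk_sig h01 a _.
set X := #|{ffun 'I_n -> 'I_N0.+1}|.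
have Xp : (0 < X)%N by apply/card_gt0P; exists [ffun=> ord0].
pose Phi (x : {ffun 'I_n -> 'I_N0.+1}) : rat :=
  \sum_a ((rho (kk S a) (tt S a (xint x)))%:~R / (kk S a)%:~R).
have bnd1 a : X%:Z * kk S a <= \sum_(x : {ffun 'I_n -> 'I_N0.+1}) rho (kk S a) (tt S a (xint x)).
  have := hav a; have := k2 a; case: ifP => _ h1 h2; nia.
have bnd2 a : 3 <= kk S a -> X%:Z * kk S a < \sum_(x : {ffun 'I_n -> 'I_N0.+1}) rho (kk S a) (tt S a (xint x)).
  move=> h3; have := hav a; rewrite h3; have := k2 a; move=> h1 h2; nia.
have big : (X%:R * n%:R : rat) < \sum_(x : {ffun 'I_n -> 'I_N0.+1}) Phi x.
  rewrite /Phi exchange_big /=.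
  have -> : (X%:R * n%:R : rat) = \sum_(a < n) (X%:R : rat) by rewrite sumr_const card_ord mulr_natr.
  have kp a : (0 : rat) < (kk S a)%:~R by rewrite ltr0z; have := k2 a; lia.
  have b2 a : (X%:R : rat) <= \sum_(x : {ffun 'I_n -> 'I_N0.+1}) (rho (kk S a) (tt S a (xint x)))%:~R / (kk S a)%:~R.
    rewrite -mulr_suml -rmorph_sum ler_pdivlMr //.
    have cX : (X%:R : rat) = (X%:Z)%:~R by rewrite -pmulrn.
    by rewrite cX -rmorphM ler_int; exact: bnd1.
  rewrite (bigD1 a0) //= [X in _ < X](bigD1 a0) //=.
  apply: ltr_leD; last by apply: ler_sum => a _; exact: b2.
  rewrite -mulr_suml -rmorph_sum ltr_pdivlMr //.
  have cX : (X%:R : rat) = (X%:Z)%:~R by rewrite -pmulrn.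
  by rewrite cX -rmorphM ltr_int; exact: bnd2.
have [x hx] : exists x, (n%:R : rat) < Phi x.
  case: (boolP [exists x, (n%:R : rat) < Phi x]) => [/existsP //|].
  rewrite negb_exists => /forallP hall.
  have : \sum_(x : {ffun 'I_n -> 'I_N0.+1}) Phi x <= \sum_(x : {ffun 'I_n -> 'I_N0.+1}) (n%:R : rat).
    by apply: ler_sum => x _; rewrite leNgt hall.
  rewrite sumr_const => h.
  have cT : #|@predT {ffun 'I_n -> 'I_N0.+1}| = X by [].
  have E : (n%:R : rat) *+ X = X%:R * n%:R by rewrite mulr_natl.
  rewrite cT E in h.
  by have := lt_le_trans big h; rewrite ltxx.
have [e [he [c hc]]] := hcub (xint x).
have := final H (xint x) e c he hc k2.
rewrite -/(Phi x); lra.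
Qed.
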